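(* Let ${\cal M}$ be a multiset of strings over $\Sigma$, let $L=\mathrm{colexBWT}({\cal M})$, and let $r_{OPT}$ be the minimum of $\mathrm{runs}(L')$ over all separator-based BWTs $L'$ of ${\cal M}$. Then $\mathrm{runs}(L)\le r_{OPT}+2c_{\cal M}$, where $c_{\cal M}$ is the number of interesting intervals of ${\cal M}$.
   Context: A run is a maximal substring consisting of one repeated character; $\mathrm{runs}(T)$ is the number of runs of $T$. $\Sigma$ is a finite ordered alphabet; $\#<\$<$ every character of $\Sigma$ and $\$_1<\cdots<\$_k<$ every character of $\Sigma$. $\mathrm{BWT}(T)$ is the concatenation of the last characters of the lexicographically sorted rotations of $T$. Omega-order: writing $S=\mathrm{root}(S)^{\exp(S)}$ with $\mathrm{root}(S)$ primitive, $S\prec_\omega T$ iff either $\mathrm{root}(S)=\mathrm{root}(T)$ and $\exp(S)<\exp(T)$, or $S^\omega<_{\mathrm{lex}}T^\omega$; $\mathrm{eBWT}$ of a multiset is the concatenation of last characters of all rotations of all its strings sorted in omega-order. For ${\cal M}=\{T_1,\ldots,T_k\}$ and a listing $(T_{\pi(1)},\ldots,T_{\pi(k)})$, the separator-based BWTs are: $\mathrm{dolEBWT}({\cal M})=\mathrm{eBWT}(\{T_i\$\})$; the mdolBWT of the listing, $\mathrm{BWT}(T_{\pi(1)}\$_1\cdots T_{\pi(k)}\$_k)$ with each $\$_j$ renamed $\$$; the concBWT of the listing, $\mathrm{BWT}(T_{\pi(1)}\$\cdots T_{\pi(k)}\$\#)$ with first character removed and $\#$ renamed $\$$; and $\mathrm{colexBWT}({\cal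 M})$, the mdolBWT of the listing of ${\cal M}$ in colexicographic order ($S<_{\mathrm{colex}}T$ iff reverse of $S$ $<_{\mathrm{lex}}$ reverse of $T$). Interesting intervals: with ${\cal R}$ the multiset of all rotations of the $T_i\$$ in lexicographic order, for $U\in\Sigma^*$ a suffix of at least two $T_i$ let $b=1+|\{R\in{\cal R}:R<_{\mathrm{lex}}U\$,\ U\$\text{ not a prefix of }R\}|$ and $e=b-1+|\{i:U\text{ suffix of }T_i\}|$; the character preceding the suffix occurrence of $U$ in $T_i$ is the one cyclically before it in $T_i\$$ ($\$$ if $U=T_i$); $[b,e]$ is interesting if some $i\neq j$ have $U$ as a suffix with different preceding characters. *)

(* Defs.v *)
From HB Require Import structures.
From mathcomp Require Import all_boot all_order.

Set Implicit Arguments.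
Unset Strict Implicit.
Unset Printing Implicit Defensive.

Import Order.TTheory.

(* Extended alphabet: # (Hash), separators $_j (Dol j; plain $ is Dol 0),
   and the characters of Sigma (Ch a).
   Order: Hash < Dol i < Dol j (i < j) < Ch a, with Ch ordered as Sigma. *)
Inductive xchar (A : Type) := Hash | Dol of nat | Ch of A.
Arguments Hash {A}.
Arguments Dol {A}.
Arguments Ch {A}.

Section XcharCount.
Variable A : countType.
Definition xcode (c : xchar A) : option (nat + A) :=
  match c with Hash => None | Dol n => Some (inl n) | Ch a => Some (inr a) end.
Definition xdecode (o : option (nat + A)) : xchar A :=
  match o with None => Hash | Some (inl n) => Dol n | Some (inr a) => Ch a end.
Lemma xcodeK : cancel xcode xdecode. Proof. by case. Qed.
End XcharCount.

HB.instance Definition _ (A : countType) :=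
  Countable.copy (xchar A) (can_type (@xcodeK A)).

Section Defs.
Context {d : Order.disp_t} (A : finOrderType d).

Notation X := (xchar A).

Definition xlt (x y : X) : bool :=
  match x, y with
  | Hash, Hash => false
  | Hash, _ => true
  | Dol _, Hash => false
  | Dol i, Dol j => (i < j)%N
  | Dol _, Ch _ => true
  | Ch _, Hash => false
  | Ch _, Dol _ => false
  | Ch a, Ch b => (a < b)%O
  end.

Fixpoint lexle (s t : seq X) : bool :=
  match s, t with
  | [::], _ => true
  | _ :: _, [::] => false
  | x :: s', y :: t' => xlt x y || ((x == y) && lexle s' t')
  end.
Definition lexlt (s t : seq X) : bool := lexle s t && (s != t).

Fixpoint runs (s : seq X) : nat :=
  match s with
  | [::] => 0
  | x :: t => match t with
              | [::] => 1
              | y :: _ => (x != y) + runs t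
              end
  end.

Definition rotations {T : Type} (s : seq T) : seq (seq T) :=
  [seq rot i s | i <- iota 0 (size s)].

Definition BWT (s : seq X) : seq X :=
  [seq last Hash R | R <- sort lexle (rotations s)].

Definition lift (T : seq A) : seq X := map Ch T.

Definition ren_dol (c : X) : X := match c with Dol _ => Dol 0 | _ => c end.
Definition ren_hash (c : X) : X := match c with Hash => Dol 0 | _ => c end.

Fixpoint mdol_str (l : seq (seq A)) (j : nat) : seq X :=
  match l with
  | [::] => [::]
  | T :: l' => lift T ++ Dol j :: mdol_str l' j.+1
  end.

Definition mdolBWT (l : seq (seq A)) : seq X := map ren_dol (BWT (mdol_str l 1)).

Definition conc_str (l : seq (seq A)) : seq X :=
  flatten [seq lift T ++ [:: Dol 0] | T <- l] ++ [:: Hash].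
Definition concBWT (l : seq (seq A)) : seq X :=
  map ren_hash (behead (BWT (conc_str l))).

Definition primitive (s : seq X) : Prop :=
  forall (p : seq X) (k : nat), s = flatten (nseq k p) -> k = 1%N.
Definition root_exp (S1 p : seq X) (k : nat) : Prop :=
  primitive p /\ S1 = flatten (nseq k p).
Definition oword (S1 : seq X) (n : nat) : X := nth Hash S1 (n %% size S1).
Definition omega_lex_lt (S1 T1 : seq X) : Prop :=
  exists n, (forall m, (m < n)%N -> oword S1 m = oword T1 m) /\ xlt (oword S1 n) (oword T1 n).
Definition omega_lt (S1 T1 : seq X) : Prop :=
  (exists p k1 k2, root_exp S1 p k1 /\ root_exp T1 p k2 /\ (k1 < k2)%N)
  \/ omega_lex_lt S1 T1.

Definition is_eBWT (Ms : seq (seq X)) (L : seq X) : Prop :=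
  exists rs : seq (seq X),
    perm_eq rs (flatten [seq rotations S1 | S1 <- Ms]) /\
    (forall i j, (i < j < size rs)%N -> ~ omega_lt (nth [::] rs j) (nth [::] rs i)) /\
    L = [seq last Hash R | R <- rs].

Definition dolstr (T : seq A) : seq X := lift T ++ [:: Dol 0].

Definition is_dolEBWT (M : seq (seq A)) (L : seq X) : Prop :=
  is_eBWT [seq dolstr T | T <- M] L.

Definition sepBWT (M : seq (seq A)) (L : seq X) : Prop :=
  is_dolEBWT M L \/
  (exists l, perm_eq l M /\ L = mdolBWT l) \/
  (exists l, perm_eq l M /\ L = concBWT l).

Definition colexle (S1 T1 : seq A) : bool := lexle (rev (lift S1)) (rev (lift T1)).
Definition colexBWT (M : seq (seq A)) : seq X := mdolBWT (sort colexle M).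

Definition allrots (M : seq (seq A)) : seq (seq X) :=
  flatten [seq rotations (dolstr T) | T <- M].

(* character cyclically preceding the suffix occurrence of U in T$ *)
Definition prec_char (U T : seq A) : X :=
  match rev (take (size T - size U) T) with
  | [::] => Dol 0
  | a :: _ => Ch a
  end.

Definition int_b (M : seq (seq A)) (U : seq A) : nat :=
  (count (fun R => lexlt R (dolstr U) && ~~ prefix (dolstr U) R) (allrots M)).+1.
Definition int_e (M : seq (seq A)) (U : seq A) : nat :=
  (int_b M U).-1 + count (suffix U) M.

Definition interestingU (M : seq (seq A)) (U : seq A) : bool :=
  (1 < count (suffix U) M)%N &&
  [exists i : 'I_(size M), exists j : 'I_(size M),
     [&& i != j, suffix U (nth [::] M i), suffix U (nth [::] M j) &
         prec_char U (nth [::] M i) != prec_char U (nth [::] M j)]].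

(* all suffixes of strings of M: the only candidates for U *)
Definition cands (M : seq (seq A)) : seq (seq A) :=
  undup (flatten [seq [seq drop k T | k <- iota 0 (size T).+1] | T <- M]).

Definition c_M (M : seq (seq A)) : nat :=
  size (undup [seq (int_b M U, int_e M U) | U <- cands M & interestingU M U]).

End Defs.

(* Main.v *)
Require Import Defs.
From mathcomp Require Import all_boot all_order zify.
Set Implicit Arguments. Unset Strict Implicit. Unset Printing Implicit Defensive.
Import Order.TTheory.

Section S.
Context {d : Order.disp_t} (A : finOrderType d).
Notation X := (xchar A).
Local Notation lift := (@Defs.lift _ A).
Local Notation lex := (@lexle _ A).
Implicit Types (x y z : X) (s t u : seq X).

Lemma xltxx x : xlt x x = false.
Proof. by case: x => //= *; rewrite ?ltnn ?ltxx. Qed.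

Lemma xlt_trans y x z : xlt x y -> xlt y z -> xlt x z.
Proof.
case: x => [|m|a]; case: y => [|n|b]; case: z => [|p|c] //=.
- exact: ltn_trans.
- exact: lt_trans.
Qed.

Lemma xlt_total x y : x != y -> xlt x y || xlt y x.
Proof.
case: x => [|m|a]; case: y => [|n|b] //=; rewrite ?eqxx // => ne.
- by rewrite -neq_ltn; apply: contra_neq ne => ->.
- by rewrite -neq_lt; apply: contra_neq ne => ->.
Qed.

Lemma xlt_asym x y : xlt x y -> xlt y x -> False.
Proof. by move=> h1 h2; have := xlt_trans h1 h2; rewrite xltxx. Qed.

Lemma lexle_refl : reflexive (@lexle _ A).
Proof. by elim=> //= x s ->; rewrite eqxx orbT. Qed.

Lemma lexle_trans : transitive (@lexle _ A).
Proof.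
move=> t s u; elim: s t u => [|x s IH] [|y t] [|z u] //=.
case/orP=> [h1|/andP[/eqP<- h1]]; case/orP=> [h2|/andP[/eqP<- h2]].
- by rewrite (xlt_trans h1 h2).
- by rewrite h1.
- by rewrite h2.
- by rewrite eqxx (IH _ _ h1 h2) orbT.
Qed.

Lemma lexle_total : total (@lexle _ A).
Proof.
elim=> [|x s IH] [|y t] //=.
case: (eqVneq x y) => [->|ne]; first by rewrite xltxx /= IH.
by case/orP: (xlt_total ne) => ->; rewrite ?orbT /=.
Qed.

Lemma lexle_anti s t : lexle s t -> lexle t s -> s = t.
Proof.
elim: s t => [|x s IH] [|y t] //=.
case/orP=> [h1|/andP[/eqP<- h1]]; case/orP=> [h2|/andP[/eqP e h2]].
- by case: (xlt_asym h1 h2).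
- by move: h1; rewrite e xltxx.
- by move: h2; rewrite xltxx.
- by rewrite (IH _ h1 h2).
Qed.


Lemma runs_cat_le s t : runs (s ++ t) <= runs s + runs t.
Proof.
elim: s => [|x s IH] //=.
case: s IH => [|y s] IH /=.
- by case: t {IH} => [|z t] //=; rewrite leq_add2r leq_b1.
- by rewrite -addnA leq_add2l.
Qed.

Lemma runs_cat_ge s t : runs s + runs t <= runs (s ++ t) + 1.
Proof.
elim: s => [|x s IH] //=; first by rewrite addn1.
case: s IH => [|y s] IH /=.
- by case: t {IH} => [|z t] //=; rewrite addnC leq_add2r leq_addl.
- by rewrite -!addnA leq_add2l.
Qed.

Definition xle x y := (x == y) || xlt x y.

Lemma size_undup_le_runs s : size (undup s) <= runs s.
Proof.
elim: s => [|x s IH] //=.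
case: s IH => [|y s] IH /=; first by [].
case: ifP => hx; case: (eqVneq x y) => [exy|nxy] /=.
- by rewrite -exy; move: IH; rewrite /= -exy.
- exact: leq_trans IH (leq_addl _ _).
- by move: hx; rewrite exy mem_head.
- by rewrite add1n ltnS.
Qed.

Lemma runs_le_size_undup s : pairwise xle s -> runs s <= size (undup s).
Proof.
elim: s => [|x s IH] //=.
case: s IH => [|y s] IH /=; first by [].
move=> /andP[/andP[hxy hxs] hp].
have IH' := IH hp.
case: (eqVneq x y) => [exy|nxy] /=.
- by rewrite exy mem_head /=.
- have hn : x \notin y :: s.
    rewrite in_cons negb_or nxy /=; apply/negP => xs.
    move: hp => /= /andP[/allP /(_ x xs) hyx _].
    move: hxy hyx; rewrite /xle (negbTE nxy) eq_sym (negbTE nxy) /=.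
    by move=> h1 h2; case: (xlt_asym h1 h2).
  by rewrite (negbTE hn) /= add1n ltnS.
Qed.

Lemma perm_size_undup s t : perm_eq s t -> size (undup s) = size (undup t).
Proof.
move=> p; apply: perm_size; apply: uniq_perm; rewrite ?undup_uniq // => z.
by rewrite !mem_undup (perm_mem p).
Qed.

Lemma runs_sorted_le s t : pairwise xle s -> perm_eq s t -> runs s <= runs t.
Proof.
move=> hs p; apply: leq_trans (runs_le_size_undup hs) _.
by rewrite (perm_size_undup p) size_undup_le_runs.
Qed.

Lemma constant_perm s t : constant s -> perm_eq s t -> s = t.
Proof.
case: s => [|x s] hc p; first by move: (perm_size p) => /= /esym/size0nil ->.
have ha : all (pred1 x) (x :: s) by rewrite /= eqxx.
have hb : all (pred1 x) t.
  by rewrite all_count -(permP p) -(perm_size p) -all_count.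
by rewrite (all_pred1P _ _ ha) (all_pred1P _ _ hb) (perm_size p).
Qed.

Definition keyle (V W : seq A) := lexle (dolstr V) (dolstr W).

Lemma keyle_refl V : keyle V V.
Proof. exact: lexle_refl. Qed.

Lemma keyle_trans : transitive keyle.
Proof. move=> ? ? ?; exact: lexle_trans. Qed.

Lemma dolstr_inj : injective (@dolstr _ A).
Proof.
move=> V W; rewrite /dolstr !cats1 => /rcons_inj [] /inj_map; apply.
by move=> a b [].
Qed.

Lemma keyle_anti V W : keyle V W -> keyle W V -> V = W.
Proof. by move=> h1 h2; apply: dolstr_inj; apply: lexle_anti. Qed.

Definition ksorted (ps : seq (seq A * X)) :=
  pairwise (fun p q : seq A * X => keyle p.1 q.1) ps.
Definition grp (ps : seq (seq A * X)) (V : seq A) := [seq q.2 | q <- ps & q.1 == V].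
Definition gsorted ps := forall V, pairwise xle (grp ps V).
Definition gcount ps :=
  count (fun V => ~~ constant (grp ps V)) (undup (map fst ps)).

Lemma split_sorted V ps : all (fun q : seq A * X => keyle V q.1) ps -> ksorted ps ->
  ps = [seq q <- ps | q.1 == V] ++ [seq q <- ps | q.1 != V].
Proof.
elim: ps => [|q ps IH] //= /andP[hq ha] /andP[hqa hs].
case: (eqVneq q.1 V) => [e|ne] /=; first by rewrite -IH.
have h0 : [seq q <- ps | q.1 == V] = [::].
  apply/eqP; rewrite -[_ == _]negbK -has_filter; apply/hasP => -[r rin /eqP e].
  move/allP: hqa => /(_ r rin); rewrite e => h.
  by case/eqP: ne; apply: keyle_anti.
rewrite h0 /=; congr (_ :: _); apply/esym/all_filterP/allP => r rin.
apply/eqP => e; move/allP: hqa => /(_ r rin); rewrite e => h.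
by case/eqP: ne; apply: keyle_anti.
Qed.


Lemma grp_filter ps V W : W != V ->
  grp [seq q <- ps | q.1 != V] W = grp ps W.
Proof.
move=> ne; rewrite /grp -filter_predI; congr map; apply: eq_filter => q /=.
by case: (eqVneq q.1 W) => //= ->; rewrite ne.
Qed.

Lemma grp_filter_sub ps V W : subseq (grp [seq q <- ps | q.1 != V] W) (grp ps W).
Proof.
rewrite /grp -filter_predI; apply: map_subseq.
have -> : [seq q <- ps | predI (fun q : seq A * X => q.1 == W) (fun q => q.1 != V) q]
   = [seq q <- [seq q <- ps | q.1 == W] | q.1 != V] by rewrite -filter_predI; apply: eq_filter => q; rewrite /= andbC.
exact: filter_subseq.
Qed.

Lemma gcount_split V c ps' : ksorted ((V, c) :: ps') ->
  gcount ((V, c) :: ps') = ~~ constant (grp ((V, c) :: ps') V)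
     + gcount [seq q <- (V, c) :: ps' | q.1 != V].
Proof.
move=> hs; set ps := (V, c) :: ps'; set R := [seq q <- ps | q.1 != V].
have VR : V \notin map fst R.
  by apply/mapP => -[q]; rewrite mem_filter => /andP[/eqP ne _] e; case: ne.
have pu : perm_eq (undup (map fst ps)) (V :: undup (map fst R)).
  apply: uniq_perm; [exact: undup_uniq| by rewrite /= mem_undup VR undup_uniq |].
  move=> W; rewrite [RHS]in_cons !mem_undup.
  case: (eqVneq W V) => [->|ne] /=.
    by rewrite /ps /= in_cons eqxx.
  rewrite in_cons (negbTE ne) /= /R /= eqxx /=.
  apply/mapP/mapP => -[q qin e]; exists q => //.
    by rewrite mem_filter qin -e ne.
  by move: qin; rewrite mem_filter => /andP[].
rewrite /gcount (permP pu) /=; congr (_ + _).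
apply: eq_in_count => W; rewrite mem_undup => Win.
have ne : W != V by apply: contraNneq VR => <-.
by rewrite grp_filter.
Qed.

Lemma abstract_main n ps1 ps2 : size ps1 <= n -> ksorted ps1 -> ksorted ps2 ->
  perm_eq ps1 ps2 -> gsorted ps1 ->
  forall p, runs (p ++ map snd ps1) <= runs (p ++ map snd ps2) + 2 * gcount ps1.
Proof.
elim: n ps1 ps2 => [|n IH] [|[V c] ps1'] ps2 //= hn hs1 hs2 pp hg p.
- by move: (perm_size pp) => /= /esym/size0nil ->; rewrite addn0.
- by move: (perm_size pp) => /= /esym/size0nil ->; rewrite addn0.
set ps1 := (V, c) :: ps1'.
have hall1 : all (fun q : seq A * X => keyle V q.1) ps1.
  by rewrite /= keyle_refl; move: hs1 => /= /andP[].
have hall2 : all (fun q : seq A * X => keyle V q.1) ps2.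
  by apply/allP => q qin; move/allP: hall1; apply; rewrite (perm_mem pp).
have e1 := split_sorted hall1 hs1.
have e2 := split_sorted hall2 hs2.
set G1 := [seq q <- ps1 | q.1 == V] in e1.
set R1 := [seq q <- ps1 | q.1 != V] in e1.
set G2 := [seq q <- ps2 | q.1 == V] in e2.
set R2 := [seq q <- ps2 | q.1 != V] in e2.
have pG : perm_eq (map snd G1) (map snd G2) by apply: perm_map; apply: perm_filter.
have pR : perm_eq R1 R2 by apply: perm_filter.
have sR1 : ksorted R1 by apply: pairwise_filter.
have sR2 : ksorted R2 by apply: pairwise_filter.
have nR1 : size R1 <= n.
  rewrite /R1 /= eqxx /= size_filter -ltnS; apply: leq_ltn_trans hn.
  exact: count_size.
have gR1 : gsorted R1.
  by move=> W; apply: subseq_pairwise (grp_filter_sub _ _ _) (hg W).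
have IHR := IH R1 R2 nR1 sR1 sR2 pR gR1.
rewrite (gcount_split hs1) -/ps1 -/R1.
have m1 : c :: [seq i.2 | i <- ps1'] = map snd G1 ++ map snd R1.
  by move: e1 => /(congr1 (map snd)); rewrite map_cat.
have m2 : map snd ps2 = map snd G2 ++ map snd R2.
  by move: e2 => /(congr1 (map snd)); rewrite map_cat.
have gG : grp ps1 V = map snd G1 by [].
rewrite m1 m2 gG.
case: (boolP (constant (map snd G1))) => hc /=.
- rewrite -(constant_perm hc pG) !catA add0n; exact: IHR.
- have h1 : runs (p ++ map snd G1) <= runs (p ++ map snd G2) + 1.
    apply: leq_trans (runs_cat_le _ _) _.
    apply: leq_trans (runs_cat_ge _ _); rewrite leq_add2l.
    apply: runs_sorted_le pG; exact: (hg V).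
  have h2 := IHR [::]; rewrite /= in h2.
  have h3 := runs_cat_ge (p ++ map snd G2) (map snd R2).
  rewrite catA; apply: leq_trans (runs_cat_le _ _) _.
  rewrite catA mulnDr muln1.
  apply: leq_trans (leq_add h1 h2) _.
  move: h3; set a := runs (p ++ _); set b := runs (map snd R2); set T := runs _.
  move: (gcount R1) => g h3.
  lia.
Qed.


Fixpoint key (R : seq X) : seq A :=
  match R with Ch a :: R' => a :: key R' | _ => [::] end.
Definition sepof (R : seq X) : X := nth Hash R (size (key R)).
Definition isCh (x : X) : bool := if x is Ch _ then true else false.

Lemma keyle_nil W : keyle [::] W.
Proof. by case: W. Qed.

Lemma keyle_cons a b V W :
  keyle (a :: V) (b :: W) = xlt (Ch a) (Ch b) || (Ch a == Ch b) && keyle V W.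
Proof. by []. Qed.

Lemma key_mono R1 R2 : lexle R1 R2 -> keyle (key R1) (key R2).
Proof.
elim: R1 R2 => [|x R1 IH] R2; first by rewrite keyle_nil.
case: x => [|n|a] /=; try by rewrite keyle_nil.
case: R2 => [|[|m|b] R2] //=.
rewrite keyle_cons /= => /orP[->//|/andP[e h]]; by rewrite e IH ?orbT.
Qed.

Lemma xle_hash y : xle Hash y.
Proof. by case: y. Qed.

Lemma sep_mono R1 R2 : lexle R1 R2 -> key R1 = key R2 -> xle (sepof R1) (sepof R2).
Proof.
rewrite /sepof.
elim: R1 R2 => [|x R1 IH] R2; first by rewrite /= xle_hash.
case: x => [|n|a] /=.
- by move=> _ _; exact: xle_hash.
- case: R2 => [|[|m|b] R2] //=.
  rewrite /xle /= => /orP[h|/andP[/eqP [->] _]] _; first by rewrite h orbT.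
  by rewrite eqxx.
- case: R2 => [|[|m|b] R2] //= /orP[h|/andP[/eqP [e] h]] [e2 e3].
  + by move: h; rewrite e2 /= ltxx.
  + by apply: IH.
Qed.

Lemma key_lift V c r : ~~ isCh c -> key (lift V ++ c :: r) = V.
Proof. by elim: V => [|a V IH] /=; [case: c | move=> h; rewrite IH]. Qed.

Lemma sepof_lift V c r : ~~ isCh c -> sepof (lift V ++ c :: r) = c.
Proof.
move=> h; rewrite /sepof key_lift // nth_cat size_map ltnn subnn //.
Qed.

Lemma key_cat u v : has (fun x => ~~ isCh x) u -> key (u ++ v) = key u.
Proof. by elim: u => [|[|n|a] u IH] //= h; rewrite IH. Qed.

Lemma sepof_cat u v : has (fun x => ~~ isCh x) u -> sepof (u ++ v) = sepof u.
Proof.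
rewrite /sepof => h; rewrite key_cat // nth_cat.
suff -> : size (key u) < size u by [].
by elim: u h => [|[|n|a] u IH] //= h; rewrite ltnS IH.
Qed.

Fixpoint bstr (bs : seq (seq A * X)) : seq X :=
  if bs is b :: bs' then lift b.1 ++ b.2 :: bstr bs' else [::].

Definition Qblock (b : seq A * X) : seq ((seq A * X) * X) :=
  [seq ((drop k b.1, b.2), prec_char (drop k b.1) b.1) | k <- iota 0 (size b.1).+1].
Definition Qm bs := flatten (map Qblock bs).

Definition F (ren : X -> X) (prev : X) (s : seq X) (i : nat) :=
  ((key (drop i s), sepof (drop i s)),
   ren (if i is j.+1 then nth Hash s j else prev)).

Lemma prec_char_drop (T : seq A) i r : 0 < i <= size T ->
  prec_char (drop i T) T = nth Hash (lift T ++ r) i.-1.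
Proof.
case/andP=> i0 iT; rewrite /prec_char size_drop subKn //.
rewrite -(cat_take_drop i T) /lift map_cat -catA nth_cat size_map size_take.
have hi : (if i < size T then i else size T) = i by case: ltngtP iT.
rewrite hi prednK // leqnn take_cat size_take hi ltnn subnn take0 cats0.
have : size (take i T) = i by rewrite size_take hi.
case/lastP: (take i T) => [|u a] /=; first by move=> e; rewrite -e in i0.
rewrite size_rcons => <- /=; rewrite rev_rcons /= -cats1 map_cat nth_cat size_map ltnn subnn.
by [].
Qed.

Lemma ren_nth_lift (ren : X -> X) (T : seq A) r j : (forall a, ren (Ch a) = Ch a) ->
  j < size T -> ren (nth Hash (lift T ++ r) j) = nth Hash (lift T ++ r) j.
Proof.
move=> hCh jT; rewrite nth_cat size_map jT.
by case: T jT => [//|a T'] jT; rewrite (nth_map a) // hCh.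
Qed.

Lemma block_map ren prev bs :
  (forall a, ren (Ch a) = Ch a) -> ren prev = Dol 0 ->
  all (fun b : seq A * X => ~~ isCh b.2 && (ren b.2 == Dol 0)) bs ->
  map (F ren prev (bstr bs)) (iota 0 (size (bstr bs))) = Qm bs.
Proof.
move=> hCh; elim: bs prev => [|[T c] bs IH] prev; first by [].
move=> hp /andP[/andP[hc0 /eqP rc0] ha].
have hc : ~~ isCh c := hc0. have rc : ren c = Dol 0 := rc0. clear hc0 rc0.
have -> : Qm ((T,c)::bs) = Qblock (T,c) ++ Qm bs by [].
have -> : bstr ((T,c)::bs) = lift T ++ c :: bstr bs by [].
rewrite size_cat size_map [size (_ :: _)]/= -addSnnS iotaD map_cat; congr (_ ++ _).
- rewrite /Qblock; apply/eq_in_map => i; rewrite mem_iota add0n ltnS => /andP[_ iT].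
  rewrite /F drop_cat size_map.
  have -> : (i < size T) = (i != size T) by rewrite ltn_neqAle iT andbT.
  case: (eqVneq i (size T)) => [->|ne].
  + rewrite subnn drop0 drop_size.
    have hk : key (c :: bstr bs) = [::] by move: hc; case: (c).
    rewrite /sepof hk /=.
    case eT: (size T) => [|j].
    * by move/size0nil: eT => ->; rewrite /= hp.
    * rewrite -[in prec_char _ T](drop_size T) (prec_char_drop (c :: bstr bs)) eT ?leqnn //.
      by rewrite ren_nth_lift // eT.
  + rewrite /= -map_drop key_lift // sepof_lift //; congr (_, _).
    case: i iT ne => [|j] iT ne; first by rewrite hp drop0 /prec_char subnn take0.
    by rewrite (prec_char_drop (c :: bstr bs)) //= ren_nth_lift.
- rewrite -(IH c rc ha).
  have -> : iota (0 + (size T).+1) (size (bstr bs)) = map (addn (size T).+1) (iota 0 (size (bstr bs))).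
    by rewrite -iotaDl addn0 add0n.
  rewrite -map_comp; apply/eq_in_map => j _ /=.
  have h : ~~ ((size T).+1 + j < size T) by rewrite -leqNgt; lia.
  have e : (size T).+1 + j - size T = j.+1 by lia.
  rewrite /F drop_cat size_map (negbTE h) e addSn /=.
  have h2 : ~~ (size T + j < size T) by rewrite -leqNgt leq_addr.
  rewrite nth_cat size_map (negbTE h2) addKn.
  by case: j {h e h2}.
Qed.


Definition phi3 (ren : X -> X) (R : seq X) := ((key R, sepof R), ren (last Hash R)).

Lemma has_drop x s i : ~~ isCh (last x s) -> i < size s ->
  has (fun y => ~~ isCh y) (drop i s).
Proof.
elim: s x i => [|a s IH] x [|i] // h hi.
- rewrite drop0; apply/hasP; exists (last a s) => //; exact: mem_last.
- by apply: (IH a).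
Qed.

Lemma last_take x s j : j < size s -> last x (take j.+1 s) = nth Hash s j.
Proof.
elim: s x j => [|a s IH] x [|j] //= hj.
- by case: s {IH hj}.
- by rewrite IH.
Qed.

Lemma phi3_rot ren s i : ~~ isCh (last Hash s) -> i < size s ->
  phi3 ren (rot i s) = F ren (last Hash s) s i.
Proof.
move=> hl hi; have hd := has_drop hl hi.
rewrite /phi3 /F /rot key_cat // sepof_cat //; congr (_, ren _).
case: i hi {hd} => [|j] hj; first by rewrite drop0 take0 cats0.
rewrite last_cat -(last_take (last Hash (drop j.+1 s)) (ltnW hj)).
done.
Qed.

Lemma last_bstr (P : pred X) x bs : P x -> all (fun b : seq A * X => P b.2) bs ->
  P (last x (bstr bs)).
Proof.
elim: bs x => [|b bs IH] x //= hx /andP[hb ha].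
by rewrite last_cat /=; apply: IH.
Qed.

Lemma rot_map ren bs :
  (forall a, ren (Ch a) = Ch a) ->
  all (fun b : seq A * X => ~~ isCh b.2 && (ren b.2 == Dol 0)) bs ->
  map (phi3 ren) (rotations (bstr bs)) = Qm bs.
Proof.
case: bs => [|b bs] // hCh ha.
have hl : ~~ isCh (last Hash (bstr (b :: bs))) /\ ren (last Hash (bstr (b :: bs))) = Dol 0.
  have -> : last Hash (bstr (b :: bs)) = last b.2 (bstr bs) by rewrite /= last_cat.
  move: ha => /= /andP[hb ha].
  have := @last_bstr (fun x => ~~ isCh x && (ren x == Dol 0)) b.2 bs hb ha.
  by case/andP => -> /eqP ->.
rewrite -(block_map hCh (proj2 hl) ha) /rotations -map_comp.
by apply/eq_in_map => i; rewrite mem_iota add0n => /= hi; apply: phi3_rot => //; case: hl.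
Qed.


Definition Pblock (T : seq A) : seq (seq A * X) :=
  [seq (drop k T, prec_char (drop k T) T) | k <- iota 0 (size T).+1].
Definition Pm (l : seq (seq A)) := flatten (map Pblock l).
Definition pr (t : (seq A * X) * X) := (t.1.1, t.2).

Lemma Qm_Pm bs : map pr (Qm bs) = Pm (map fst bs).
Proof.
elim: bs => [|b bs IH] //.
have -> : Qm (b :: bs) = Qblock b ++ Qm bs by [].
rewrite map_cat IH /Pm.
change (flatten [seq Pblock i | i <- [seq i.1 | i <- b :: bs]]) with
  (Pblock b.1 ++ flatten [seq Pblock i | i <- [seq i.1 | i <- bs]]).
by rewrite /Qblock /Pblock -map_comp.
Qed.

Lemma Pm_perm l1 l2 : perm_eq l1 l2 -> perm_eq (Pm l1) (Pm l2).
Proof. by move=> p; apply: perm_flatten; apply: perm_map. Qed.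

Fixpoint mkb (l : seq (seq A)) (j : nat) : seq (seq A * X) :=
  if l is T :: l' then (T, Dol j) :: mkb l' j.+1 else [::].

Lemma mdol_bstr l j : mdol_str l j = bstr (mkb l j).
Proof. by elim: l j => [|T l IH] j //=; rewrite IH. Qed.

Lemma mkb_fst l j : map fst (mkb l j) = l.
Proof. by elim: l j => [|T l IH] j //=; rewrite IH. Qed.

Lemma mkb_ok l j : all (fun b : seq A * X => ~~ isCh b.2 && (ren_dol b.2 == Dol 0)) (mkb l j).
Proof. by elim: l j => [|T l IH] j //=; rewrite IH. Qed.

Lemma sort_pairwise (s : seq (seq X)) : pairwise lex (sort lex s).
Proof.
rewrite -sorted_pairwise; first exact: (sort_sorted (@lexle_total) s).
exact: lexle_trans.
Qed.

Lemma ksorted_map ren (rs : seq (seq X)) : pairwise lex rs ->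
  ksorted (map (pr \o phi3 ren) rs).
Proof.
move=> h; rewrite /ksorted pairwise_map.
by apply: sub_pairwise h => R1 R2 /key_mono.
Qed.

Lemma mdol_ps l :
  let ps := map (pr \o phi3 (@ren_dol _ A)) (sort lex (rotations (mdol_str l 1))) in
  [/\ mdolBWT l = map snd ps, ksorted ps & perm_eq ps (Pm l)].
Proof.
move=> ps; split.
- by rewrite /mdolBWT /BWT /ps -!map_comp.
- exact/ksorted_map/sort_pairwise.
- have hs : perm_eq (sort lex (rotations (mdol_str l 1))) (rotations (mdol_str l 1)).
    by rewrite perm_sort perm_refl.
  rewrite /ps map_comp; apply: perm_trans (perm_map _ (perm_map _ hs)) _.
  by rewrite mdol_bstr rot_map ?mkb_ok // Qm_Pm mkb_fst.
Qed.


Lemma xlt_hash y : xlt y Hash = false.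
Proof. by case: y. Qed.

Lemma bstr_cat b1 b2 : bstr (b1 ++ b2) = bstr b1 ++ bstr b2.
Proof. by elim: b1 => [|b b1 IH] //=; rewrite IH -catA. Qed.

Lemma conc_bstr l : conc_str l = bstr [seq (T, Dol 0) | T <- l] ++ [:: Hash].
Proof.
rewrite /conc_str; elim: l => [|T l IH] //=.
by rewrite -!catA IH.
Qed.

Lemma hash_notin l : Hash \notin bstr [seq (T, @Dol A 0) | T <- l].
Proof.
elim: l => [|T l IH] //=; rewrite mem_cat in_cons negb_or IH andbT /=.
by apply/mapP => -[a _].
Qed.

Lemma Pm_cat l1 l2 : Pm (l1 ++ l2) = Pm l1 ++ Pm l2.
Proof. by rewrite /Pm map_cat flatten_cat. Qed.

Lemma conc_ps l : exists ps : seq (seq A * X),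
  [/\ concBWT l = map snd ps, ksorted ps & perm_eq ps (Pm l)].
Proof.
set s0 := bstr [seq (T, @Dol A 0) | T <- l].
have es : conc_str l = s0 ++ [:: Hash] by rewrite conc_bstr.
set f := pr \o phi3 (@ren_hash _ A).
have hs : perm_eq (sort lex (rotations (conc_str l))) (rotations (conc_str l)).
  by rewrite perm_sort perm_refl.
have hp := sort_pairwise (rotations (conc_str l)).
set h := Hash :: s0.
have hrot : h \in rotations (conc_str l).
  apply/mapP; exists (size s0); last by rewrite es rot_size_cat.
  by rewrite mem_iota es size_cat addn1 ltnS leqnn.
case E: (sort lex (rotations (conc_str l))) hs hp => [|x rest] hs hp.
  by move: (perm_mem hs h); rewrite hrot in_nil.
have xh : x = h.
  have xin : x \in rotations (conc_str l) by rewrite -(perm_mem hs) mem_head.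
  case: (eqVneq h x) => [//|ne].
  have : lex x h.
    move: hp => /= /andP[/allP hx _]; apply: hx.
    by move: (perm_mem hs h); rewrite hrot in_cons (negbTE ne) /=.
  case/mapP: xin => i; rewrite mem_iota add0n es size_cat addn1 ltnS => /andP[_].
  rewrite leq_eqVlt => /orP[/eqP ->|hi] ->; first by rewrite rot_size_cat.
  rewrite /rot drop_cat hi (drop_nth Hash hi) /=.
  have : nth Hash s0 i != Hash.
    by apply: contraNneq (hash_notin l) => <-; exact: mem_nth.
  by move=> hn; rewrite xlt_hash (negbTE hn).
exists (map f rest); split.
- by rewrite /concBWT /BWT E /= -!map_comp; apply: eq_map.
- by apply: ksorted_map; move: hp => /= /andP[].
- have e1 : map f (rotations (conc_str l)) = Pm l ++ [:: ([::], Dol 0)].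
    rewrite /f map_comp es.
    have -> : s0 ++ [:: Hash] = bstr ([seq (T, Dol 0) | T <- l] ++ [:: ([::], Hash)]).
      by rewrite bstr_cat.
    rewrite rot_map //; last first.
      by rewrite all_cat /= andbT all_map; apply/allP.
    by rewrite Qm_Pm map_cat -map_comp map_id Pm_cat.
  have fx : f x = ([::], Dol 0).
    rewrite xh /f /= /phi3 /=; congr (_, _).
    have : ren_hash (last (@Hash A) s0) == Dol 0.
      by apply: (@last_bstr (fun y => ren_hash y == Dol 0)) => //; rewrite all_map; apply/allP.
    by move/eqP.
  have := perm_map f hs; rewrite e1 /= fx => hq.
  have : perm_eq (([::], Dol 0) :: map f rest) (([::], Dol 0) :: Pm l).
    by apply: perm_trans hq _; rewrite perm_catC.
  by rewrite perm_cons.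
Qed.


Lemma lex_diff a b : ~~ lex a b -> prefix b a \/
  exists n, [/\ n < size b, n < size a,
     (forall m, m < n -> nth Hash a m = nth Hash b m) & xlt (nth Hash b n) (nth Hash a n)].
Proof.
elim: a b => [|x a IH] [|y b] //=; first by left.
case: (eqVneq x y) => [<-|ne].
- rewrite xltxx /= => /IH [h|[n [h1 h2 h3 h4]]]; first by left.
  right; exists n.+1; split => //.
  by case=> [|m] //= /h3.
- rewrite /= orbF => hn; right; exists 0; split => //.
  by have := xlt_total ne; rewrite (negbTE hn).
Qed.

Lemma prefix_dolstr V W : prefix (dolstr V) (@dolstr _ A W) -> V = W.
Proof.
elim: V W => [|a V IH] [|b W] //=.
by case/andP => /eqP [->] /IH ->.
Qed.

Lemma omega_key V1 V2 u1 u2 : ~~ keyle V1 V2 ->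
  omega_lt (dolstr V2 ++ u2) (dolstr V1 ++ u1).
Proof.
move=> hn; right.
case: (lex_diff hn) => [/prefix_dolstr e|[n [h1 h2 h3 h4]]].
  by move: hn; rewrite e keyle_refl.
have s1 : n < size (dolstr V1 ++ u1) by rewrite size_cat ltn_addr.
have s2 : n < size (dolstr V2 ++ u2) by rewrite size_cat ltn_addr.
exists n; split.
- move=> m hm; rewrite /oword !modn_small ?(ltn_trans hm) //.
  rewrite (nth_cat Hash (dolstr V2)) (nth_cat Hash (dolstr V1)) (ltn_trans hm h1) (ltn_trans hm h2).
  by rewrite h3.
- by rewrite /oword !modn_small // (nth_cat Hash (dolstr V2)) (nth_cat Hash (dolstr V1)) h1 h2.
Qed.

Lemma rot_dolstr T k : k <= size T -> rot k (dolstr T) = dolstr (drop k T) ++ lift (take k T).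
Proof.
move=> hk; rewrite /rot /dolstr drop_cat take_cat size_map.
case: ltngtP hk => // [hlt|->] _.
- by rewrite -map_drop -map_take -catA.
- by rewrite subnn drop0 take0 cats0 drop_size take_size.
Qed.

Lemma rot_form (M : seq (seq A)) R :
  R \in flatten [seq rotations S1 | S1 <- [seq dolstr T | T <- M]] ->
  exists V u, R = dolstr V ++ u.
Proof.
case/flatten_mapP => S1 /mapP [T _ ->] /mapP [k]; rewrite mem_iota add0n => hk ->.
exists (drop k T), (lift (take k T)); apply: rot_dolstr.
by move: hk; rewrite /dolstr size_cat size_map addn1 ltnS.
Qed.

Lemma dol_map (M : seq (seq A)) :
  map (pr \o phi3 id) (flatten [seq rotations S1 | S1 <- [seq dolstr T | T <- M]]) = Pm M.
Proof.
elim: M => [|T M IH] //.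
have -> : flatten [seq rotations S1 | S1 <- [seq dolstr T0 | T0 <- T :: M]] =
  rotations (dolstr T) ++ flatten [seq rotations S1 | S1 <- [seq dolstr T0 | T0 <- M]] by [].
rewrite map_cat IH.
change (Pm (T :: M)) with (Pblock T ++ Pm M); congr (_ ++ _).
rewrite map_comp.
have -> : dolstr T = bstr [:: (T, Dol 0)] by [].
by rewrite rot_map //= cats0 -map_comp.
Qed.

Lemma dol_ps M L : is_dolEBWT M L -> exists ps : seq (seq A * X),
  [/\ L = map snd ps, ksorted ps & perm_eq ps (Pm M)].
Proof.
case=> rs [hperm [hsort hL]].
exists (map (pr \o phi3 id) rs); split.
- by rewrite hL -map_comp.
- rewrite /ksorted pairwise_map; apply/(pairwiseP [::]) => i j; rewrite !inE => hi hj hij.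
  apply: contraT => hn.
  have [V1 [u1 e1]] : exists V u, nth [::] rs i = dolstr V ++ u.
    by apply: (rot_form (M := M)); rewrite -(perm_mem hperm) mem_nth.
  have [V2 [u2 e2]] : exists V u, nth [::] rs j = dolstr V ++ u.
    by apply: (rot_form (M := M)); rewrite -(perm_mem hperm) mem_nth.
  move: hn; rewrite /= /phi3 /= e1 e2 /dolstr -!catA !key_lift // => hn.
  case: (hsort i j); first by rewrite hij hj.
  by rewrite e1 e2; exact: omega_key.
- by rewrite -dol_map; apply: perm_map.
Qed.


Fixpoint QVf (l : seq (seq A)) (j : nat) (V : seq A) : seq ((seq A * X) * X) :=
  if l is T :: l' then
    (if suffix V T then [:: ((V, Dol j), prec_char V T)] else [::]) ++ QVf l' j.+1 V
  else [::].

Lemma filter_iota_drop (T V : seq A) :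
  [seq k <- iota 0 (size T).+1 | drop k T == V] =
  if suffix V T then [:: size T - size V] else [::].
Proof.
have e : {in iota 0 (size T).+1, (fun k => drop k T == V) =1
          (fun k => (k == size T - size V) && suffix V T)}.
  move=> k; rewrite mem_iota add0n ltnS => /= hk.
  rewrite suffixE; apply/eqP/andP => [<-|[/eqP -> /eqP //]].
  by rewrite size_drop subKn // eqxx.
rewrite (eq_in_filter e); case: ifP => hs.
- rewrite (eq_filter (a2 := pred1 (size T - size V))); last by move=> k /=; rewrite andbT.
  by apply: filter_pred1_uniq; rewrite ?iota_uniq // mem_iota add0n ltnS leq_subr.
- by rewrite (eq_filter (a2 := pred0)) ?filter_pred0 // => k /=; rewrite andbF.
Qed.

Lemma filter_Qblock T c V : [seq t <- Qblock (T, c) | t.1.1 == V] =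
  if suffix V T then [:: ((V, c), prec_char V T)] else [::].
Proof.
rewrite /Qblock filter_map.
rewrite (eq_filter (a2 := fun k => drop k T == V)) // filter_iota_drop; case: ifP => //= hs.
by move: hs; rewrite suffixE => /eqP ->.
Qed.

Lemma QV_eq l j V : [seq t <- Qm (mkb l j) | t.1.1 == V] = QVf l j V.
Proof.
elim: l j => [|T l IH] j //.
have -> : Qm (mkb (T :: l) j) = Qblock (T, Dol j) ++ Qm (mkb l j.+1) by [].
by rewrite filter_cat filter_Qblock IH.
Qed.

Lemma QVf_gt l j i V : i < j -> all (fun t : seq A * X * X => xlt (Dol i) t.1.2) (QVf l j V).
Proof.
elim: l j => [|T l IH] j //= hij; rewrite all_cat; apply/andP; split.
- by case: ifP => //= _; rewrite hij.
- by apply: IH; apply: ltn_trans hij _.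
Qed.

Lemma QVf_sorted l j V : pairwise (fun t1 t2 : seq A * X * X => xlt t1.1.2 t2.1.2) (QVf l j V).
Proof.
elim: l j => [|T l IH] j //=; rewrite pairwise_cat IH andbT.
case: ifP => //= _; rewrite andbT allrel1l.
exact: QVf_gt.
Qed.

Lemma QVf_snd l j V : map snd (QVf l j V) = [seq prec_char V T | T <- l & suffix V T].
Proof.
elim: l j => [|T l IH] j //=; rewrite map_cat IH.
by case: ifP.
Qed.

Lemma pairwise_strict (Y : Type) (f : Y -> X) (s : seq Y) :
  pairwise (fun a b => xle (f a) (f b)) s -> uniq (map f s) ->
  pairwise (fun a b => xlt (f a) (f b)) s.
Proof.
elim: s => [|x s IH] //= /andP[ha hp] /andP[hn hu]; rewrite IH // andbT.
elim: s {IH hp hu} ha hn => [|y s IH] //= /andP[h1 h2]; rewrite in_cons negb_or => /andP[ne hn].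
by rewrite IH // andbT; move: h1; rewrite /xle (negbTE ne).
Qed.

Lemma lexle_catl p a b : lex (p ++ a) (p ++ b) = lex a b.
Proof. by elim: p => [|x p IH] //=; rewrite xltxx eqxx IH. Qed.

Lemma prec_mono V T1 T2 : suffix V T1 -> suffix V T2 -> colexle T1 T2 ->
  xle (prec_char V T1) (prec_char V T2).
Proof.
move=> /suffixP [X1 ->] /suffixP [X2 ->].
rewrite /colexle /prec_char !size_cat !addnK !take_size_cat //.
rewrite /Defs.lift !map_cat !rev_cat lexle_catl -!map_rev.
case: (rev X1) => [|a Y1]; case: (rev X2) => [|b Y2] //=.
rewrite /xle /= => /orP[->|/andP[/eqP [->] _]]; by rewrite ?orbT ?eqxx.
Qed.

Lemma colexle_total : total (@colexle _ A).
Proof. by move=> T1 T2; apply: lexle_total. Qed.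

Lemma colexle_trans : transitive (@colexle _ A).
Proof. by move=> T1 T2 T3; apply: lexle_trans. Qed.

Lemma colex_gsorted M V :
  pairwise xle [seq prec_char V T | T <- sort (@colexle _ A) M & suffix V T].
Proof.
have hp : pairwise (@colexle _ A) (sort (@colexle _ A) M).
  by rewrite -sorted_pairwise ?sort_sorted //; [exact: colexle_total | exact: colexle_trans].
rewrite pairwise_map.
apply: (@sub_in_pairwise _ (suffix V) (@colexle _ A)).
- by move=> T1 T2 h1 h2; apply: prec_mono.
- by apply/allP => T; rewrite mem_filter => /andP[].
- by apply: pairwise_filter.
Qed.


Lemma colex_gs M :
  gsorted (map (pr \o phi3 (@ren_dol _ A))
     (sort lex (rotations (mdol_str (sort (@colexle _ A) M) 1)))).
Proof.
move=> V.
set l := sort (@colexle _ A) M.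
set rs := sort lex (rotations (mdol_str l 1)).
set ts := map (phi3 (@ren_dol _ A)) rs.
set tV := [seq t <- ts | t.1.1 == V].
have eg : grp (map (pr \o phi3 (@ren_dol _ A)) rs) V = map snd tV.
  by rewrite /grp map_comp filter_map -map_comp.
have hts : perm_eq ts (Qm (mkb l 1)).
  have hs : perm_eq rs (rotations (mdol_str l 1)) by rewrite perm_sort perm_refl.
  by rewrite -(@rot_map (@ren_dol _ A)) ?mkb_ok // -mdol_bstr; apply: perm_map.
have htV : perm_eq tV (QVf l 1 V) by rewrite -QV_eq; apply: perm_filter.
have hp1 : pairwise (fun t1 t2 : seq A * X * X => xle t1.1.2 t2.1.2) tV.
  have h0 : pairwise (fun R1 R2 => (key R1 == key R2) ==> xle (sepof R1) (sepof R2)) rs.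
    apply: sub_pairwise (sort_pairwise _) => R1 R2 h.
    by apply/implyP => /eqP e; apply: sep_mono.
  have h1 : pairwise (fun t1 t2 : seq A * X * X => (t1.1.1 == t2.1.1) ==> xle t1.1.2 t2.1.2) tV.
    by apply: pairwise_filter; rewrite /ts pairwise_map.
  apply: (sub_in_pairwise (P := fun t : seq A * X * X => t.1.1 == V)) h1.
    by move=> t1 t2 /eqP e1 /eqP e2; rewrite e1 e2 eqxx.
  by apply/allP => t; rewrite mem_filter => /andP[].
have hu : uniq (map (fun t : seq A * X * X => t.1.2) tV).
  rewrite (perm_uniq (perm_map _ htV)).
  apply: (@pairwise_uniq _ (@xlt _ A)); first by move=> x; rewrite xltxx.
  by rewrite pairwise_map; apply: QVf_sorted.
have hp2 := pairwise_strict hp1 hu.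
have e : tV = QVf l 1 V.
  apply: (@irr_sorted_eq _ (fun t1 t2 : seq A * X * X => xlt t1.1.2 t2.1.2)).
  - by move=> y x z; apply: xlt_trans.
  - by move=> x; rewrite /= xltxx.
  - exact: pairwise_sorted.
  - exact/pairwise_sorted/QVf_sorted.
  - exact: perm_mem.
rewrite eg e QVf_snd; exact: colex_gsorted.
Qed.


Lemma prefix_lexle a b : prefix a b -> lex a b.
Proof.
elim: a b => [|x a IH] [|y b] //=.
by case/andP => /eqP <- /IH ->; rewrite eqxx orbT.
Qed.

Lemma lex_app a b c : lex a b -> ~~ prefix a b ->
  lex (a ++ c) b && ~~ prefix b (a ++ c).
Proof.
elim: a b => [|x a IH] [|y b] //=.
case/orP => [h|/andP[/eqP <- h]].
- move=> _; rewrite h /=; apply/negP => /andP[/eqP e _].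
  by move: h; rewrite e xltxx.
- by rewrite eqxx /= xltxx /= => /(IH _ h) /andP[-> ->].
Qed.

Lemma count_lt (Y : eqType) (p q : pred Y) (s : seq Y) (x : Y) : subpred p q -> x \in s -> q x -> ~~ p x ->
  count p s < count q s.
Proof.
move=> hpq; elim: s => [|y s IH] //; rewrite in_cons => /orP[/eqP <-|xs] hq hp /=.
- by rewrite (negbTE hp) hq add0n add1n ltnS sub_count.
- have h1 := IH xs hq hp.
  have h2 : p y <= q y by case: (p y) (hpq y) => // ->.
  move: h1 h2; move: (p y) (q y) (count p s) (count q s) => a b c e; lia.
Qed.

Lemma int_b_lt M U1 U2 : lex (dolstr U1) (dolstr U2) -> U1 != U2 ->
  has (suffix U1) M -> int_b M U1 < int_b M U2.
Proof.
move=> hle hne /hasP [T TM hs].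
rewrite /int_b ltnS.
have hne' : dolstr U1 != dolstr U2 by apply: (contra_neq (@dolstr_inj U1 U2)) hne.
have hnp : ~~ prefix (dolstr U1) (dolstr U2).
  by apply/negP => /prefix_dolstr e; rewrite e eqxx in hne.
set k := size T - size U1.
have hk : k <= size T by exact: leq_subr.
have eR : rot k (dolstr T) = dolstr U1 ++ lift (take k T).
  by rewrite rot_dolstr // (eqP (etrans (esym (suffixE U1 T)) hs)).
apply: (count_lt (x := rot k (dolstr T))).
- move=> R /andP[/andP[h1 h2] h3]; apply/andP; split; last first.
    apply: contra h3 => /prefix_lexle h4; exfalso.
    by move/negP: hne'; apply; apply/eqP/lexle_anti => //; apply: lexle_trans h4 h1.
  apply/andP; split; first exact: lexle_trans h1 hle.
  apply: contra_neq hne' => eR2; apply: lexle_anti => //.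
  by rewrite -eR2.
- apply/flatten_mapP; exists T => //; apply/mapP; exists k => //.
  by rewrite mem_iota add0n /dolstr size_cat size_map addn1 ltnS.
- rewrite eR; have /andP[h1 h2] := lex_app (lift (take k T)) hle hnp.
  rewrite /lexlt h1 h2 andbT /=; apply: contra hnp => /eqP <-.
  exact: prefix_prefix.
- by rewrite eR /lexlt prefix_prefix andbF.
Qed.


Lemma grp_Pm M V : grp (Pm M) V = [seq prec_char V T | T <- M & suffix V T].
Proof.
elim: M => [|T M IH] //.
change (Pm (T :: M)) with (Pblock T ++ Pm M).
rewrite /grp filter_cat map_cat -/(grp (Pm M) V) IH.
have -> : Pblock T = map pr (Qblock (T, Dol 0)) by rewrite /Pblock /Qblock -map_comp.
rewrite filter_map -map_comp.
have -> : [seq x <- Qblock (T, Dol 0) | preim pr (fun q : seq A * X => q.1 == V) x]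
   = [seq t <- Qblock (T, Dol 0) | t.1.1 == V] by apply: eq_filter.
rewrite filter_Qblock /=; by case: ifP.
Qed.

Lemma interesting_of M V :
  ~~ constant [seq prec_char V T | T <- M & suffix V T] -> @interestingU _ A M V.
Proof.
set s := [seq prec_char V T | T <- M & suffix V T].
have noncst : ~~ constant s -> exists x y, [/\ x \in s, y \in s & x != y].
  case: s => [|a s'] //= /allPn [y ys hy]; exists a, y; split => //.
  - exact: mem_head.
  - by rewrite in_cons ys orbT.
  - by rewrite eq_sym.
move=> hc; have [x [y [xs ys nxy]]] := noncst hc.
case/mapP: xs => T1; rewrite mem_filter => /andP[s1 T1M] ex.
case/mapP: ys => T2; rewrite mem_filter => /andP[s2 T2M] ey.
have nT : T1 != T2 by apply: contra_neq nxy => e; rewrite ex ey e.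
apply/andP; split.
- rewrite -size_filter.
  have hu : uniq [:: T1; T2] by rewrite /= inE nT.
  apply: leq_trans (uniq_leq_size hu _) => // T.
  by rewrite !inE mem_filter => /orP[/eqP->|/eqP->]; rewrite ?s1 ?s2 ?T1M ?T2M.
- have i1 : index T1 M < size M by rewrite index_mem.
  have i2 : index T2 M < size M by rewrite index_mem.
  apply/existsP; exists (Ordinal i1); apply/existsP; exists (Ordinal i2).
  rewrite /= !nth_index // s1 s2 -ex -ey nxy !andbT.
  apply/negP => /eqP /(congr1 val) /= e.
  by move: nT; rewrite -(nth_index [::] T1M) e nth_index // eqxx.
Qed.


Lemma keys_Pm M : map fst (Pm M) =
  flatten [seq [seq drop k T | k <- iota 0 (size T).+1] | T <- M].
Proof.
elim: M => [|T M IH] //.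
change (Pm (T :: M)) with (Pblock T ++ Pm M).
by rewrite map_cat IH /Pblock -map_comp.
Qed.

Lemma gcount_le M ps : perm_eq ps (Pm M) -> gcount ps <= c_M M.
Proof.
move=> pp.
have e1 : perm_eq (undup (map fst ps)) (cands M).
  apply: uniq_perm; rewrite ?undup_uniq // => V.
  by rewrite /cands !mem_undup -keys_Pm (perm_mem (perm_map fst pp)).
rewrite /gcount (permP e1).
apply: (@leq_trans (count (@interestingU _ A M) (cands M))).
  apply: sub_count => V hQ; apply: interesting_of; apply: contra hQ => hc.
  have hp' : perm_eq (grp (Pm M) V) (grp ps V).
    by apply: perm_map; apply: perm_filter; rewrite perm_sym.
  by rewrite -(constant_perm _ hp') // grp_Pm.
rewrite /c_M undup_id.
  by rewrite size_map size_filter.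
rewrite map_inj_in_uniq; first by apply: filter_uniq; exact: undup_uniq.
move=> U1 U2; rewrite !mem_filter => /andP[h1 _] /andP[h2 _] /(congr1 fst) /= e.
case: (eqVneq U1 U2) => // ne; exfalso.
have hs1 : has (suffix U1) M by rewrite has_count; case/andP: h1 => c1 _; apply: ltn_trans c1.
have hs2 : has (suffix U2) M by rewrite has_count; case/andP: h2 => c2 _; apply: ltn_trans c2.
case/orP: (lexle_total (dolstr U1) (dolstr U2)) => h.
- by have := int_b_lt h ne hs1; rewrite e ltnn.
- by rewrite eq_sym in ne; have := int_b_lt h ne hs2; rewrite e ltnn.
Qed.

End S.

Theorem proposition2 (d : Order.disp_t) (A : finOrderType d)
  (M : seq (seq A)) (L' : seq (xchar A)) :
  sepBWT M L' -> (runs (colexBWT M) <= runs L' + 2 * c_M M)%N.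
Proof.
move=> hL.
have [ps2 [eL hs2 hp2]] : exists ps2 : seq (seq A * xchar A),
    [/\ L' = map snd ps2, ksorted ps2 & perm_eq ps2 (Pm M)].
  case: hL => [hd|[[l [pl ->]]|[l [pl ->]]]].
  - exact: dol_ps.
  - have [e s p] := mdol_ps l.
    eexists; split; [exact: e | exact: s | exact: perm_trans p (Pm_perm pl)].
  - have [ps [e s p]] := conc_ps l.
    by exists ps; split => //; exact: perm_trans p (Pm_perm pl).
have [e1 s1 p1] := mdol_ps (sort (@colexle _ A) M).
have pM : perm_eq (sort (@colexle _ A) M) M by rewrite perm_sort perm_refl.
have p1' := perm_trans p1 (Pm_perm pM).
have g1 := colex_gs M.
rewrite /colexBWT e1 eL.
have hp2' : perm_eq (Pm M) ps2 by rewrite perm_sym.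
have := abstract_main (leqnn _) s1 hs2 (perm_trans p1' hp2') g1 [::].
move=> /= h; apply: leq_trans h _.
by rewrite leq_add2l leq_mul2l gcount_le ?orbT.
Qed.
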